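(* Assume $f(\cdot,u_t)$ is a diffeomorphism for all $t$ and that the relevant matrices are invertible. Consider (A) the pure fading-memory extended Kalman filter in the form $s_{t|t-1}=f(s_{t-1},u_t)$, $P_{t|t-1}=(1+\alpha_t)F_{t-1}P_{t-1}F_{t-1}^\top$, $\hat y_t=h(s_{t|t-1},u_t)$, $P_t^{-1}=P_{t|t-1}^{-1}+\mathcal I_t$, $s_t=s_{t|t-1}+P_t g_t^\top$; and (B) the recursion $s_{t|t-1}=f(s_{t-1},u_t)$, $\hat y_t=h(s_{t|t-1},u_t)$, $J_t=(1-\gamma_t)(F_{t-1}^{-1})^\top J_{t-1}F_{t-1}^{-1}+\gamma_t\mathcal I_t$, $s_t=s_{t|t-1}+\eta_tJ_t^{-1}g_t^\top$, where $F_{t-1}=\partial f/\partial s|_{(s_{t-1},u_t)}$, $g_t=\partial\ln p_{\mathrm{obs}}(y_t\mid h(s,u_t))/\partial s|_{s=s_{t|t-1}}$ and $\mathcal I_t=\mathbb E_{y\sim p_{\mathrm{obs}}(\cdot\mid\hat y_t)}[(\partial\ln p_{\mathrm{obs}}(y\mid h(s,u_t))/\partial s|_{s=s_{t|t-1}})^{\otimes2}]$. If the hyperparameters satisfy $\eta_t=\gamma_t$ and $\frac1{\eta_t}=\frac1{1+\alpha_t}\frac1{\eta_{t-1}}+1$ for $t\ge1$, and both are initialized at the same $s_0$ with $P_0=\eta_0J_0^{-1}$, then for all $t\ge0$ both produce the same $s_t$ and $P_t=\eta_tJ_t^{-1}$.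
   Context: Conventions: gradients of real functions are row vectors; for a row vector $v$, $v^{\otimes2}=v^\top v$. $p_{\mathrm{obs}}(y\mid\hat y)$ is an exponential family parameterized by its mean parameter $\hat y$; $f,h$ are smooth; $u_t$ are inputs, $y_t$ observations, $\alpha_t\ge0$ fading-memory weights, $\eta_t$ learning rates, $\gamma_t$ decay rates. *)

(* Defs.v *)
(* the statement is purely algebraic (matrix recursions) once the
   model-dependent quantities (Jacobian of f, score g_t, Fisher information I_t)
   are abstracted as functions of the predicted/previous state. *)
From HB Require Import structures.
From mathcomp Require Import all_boot all_order all_algebra.
Set Implicit Arguments. Unset Strict Implicit. Unset Printing Implicit Defensive.
Import Order.TTheory GRing.Theory Num.Theory.
Local Open Scope ring_scope.

(* Model data (time index t refers to the input u_t):
   f  t s   = f(s, u_t)                      (state transition, s column vector)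
   Jf t s   = ∂f/∂s at (s, u_t)              (so F_{t-1} = Jf t s_{t-1})
   gr t s   = ∂ ln p_obs(y_t | h(s',u_t))/∂s' at s' = s   (row vector)
   Fi t s   = E_{y ~ p_obs(.|h(s,u_t))}[(∂ ln p_obs(y | h(s',u_t))/∂s' at s)^{⊗2}]
   so that g_t = gr t s_{t|t-1} and I_t = Fi t s_{t|t-1}. *)

Definition ekfA_step (R : realFieldType) (n : nat)
    (f : nat -> 'cV[R]_n -> 'cV[R]_n) (Jf : nat -> 'cV[R]_n -> 'M[R]_n)
    (gr : nat -> 'cV[R]_n -> 'rV[R]_n) (Fi : nat -> 'cV[R]_n -> 'M[R]_n)
    (alpha : nat -> R)
    (s sp : nat -> 'cV[R]_n) (P Pp : nat -> 'M[R]_n) (t : nat) : Prop :=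
  [/\ sp t.+1 = f t.+1 (s t),
      Pp t.+1 = (1 + alpha t.+1) *: (Jf t.+1 (s t) *m P t *m (Jf t.+1 (s t))^T),
      invmx (P t.+1) = invmx (Pp t.+1) + Fi t.+1 (sp t.+1) &
      s t.+1 = sp t.+1 + P t.+1 *m (gr t.+1 (sp t.+1))^T].

Definition recB_step (R : realFieldType) (n : nat)
    (f : nat -> 'cV[R]_n -> 'cV[R]_n) (Jf : nat -> 'cV[R]_n -> 'M[R]_n)
    (gr : nat -> 'cV[R]_n -> 'rV[R]_n) (Fi : nat -> 'cV[R]_n -> 'M[R]_n)
    (eta gamma : nat -> R)
    (s sp : nat -> 'cV[R]_n) (J : nat -> 'M[R]_n) (t : nat) : Prop :=
  [/\ sp t.+1 = f t.+1 (s t),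
      J t.+1 = (1 - gamma t.+1) *: ((invmx (Jf t.+1 (s t)))^T *m J t *m invmx (Jf t.+1 (s t)))
               + gamma t.+1 *: Fi t.+1 (sp t.+1) &
      s t.+1 = sp t.+1 + eta t.+1 *: (invmx (J t.+1) *m (gr t.+1 (sp t.+1))^T)].

(* Main.v *)
Require Import Defs.
From HB Require Import structures.
From mathcomp Require Import all_boot all_order all_algebra.
From mathcomp Require Import ring lra.
Import Order.TTheory GRing.Theory Num.Theory.
Local Open Scope ring_scope.

Lemma invmx_uniq (R : fieldType) n (A B : 'M[R]_n) :
  A \in unitmx -> B *m A = 1%:M -> invmx A = B.
Proof. by move=> uA BA; rewrite -(mulmxK uA B) BA mul1mx. Qed.

Lemma invmx_conj (R : fieldType) n (F M : 'M[R]_n) :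
  F \in unitmx -> M \in unitmx ->
  invmx (F *m M *m F^T) = (invmx F)^T *m invmx M *m invmx F.
Proof.
move=> uF uM; apply: invmx_uniq.
  by rewrite !unitmx_mul unitmx_tr uF uM.
by rewrite !mulmxA (mulmxKV uF) (mulmxKV uM) -trmx_mul mulmxV // trmx1.
Qed.

Theorem proposition14 (R : realFieldType) (n : nat)
    (f : nat -> 'cV[R]_n -> 'cV[R]_n) (Jf : nat -> 'cV[R]_n -> 'M[R]_n)
    (gr : nat -> 'cV[R]_n -> 'rV[R]_n) (Fi : nat -> 'cV[R]_n -> 'M[R]_n)
    (alpha eta gamma : nat -> R)
    (sA spA : nat -> 'cV[R]_n) (P Pp : nat -> 'M[R]_n)
    (sB spB : nat -> 'cV[R]_n) (J : nat -> 'M[R]_n)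
    (* Jacobians of f(., u_t) are invertible *)
    (hJf : forall t x, Jf t x \in unitmx)
    (* the relevant matrices are invertible *)
    (hP : forall t, P t \in unitmx) (hPp : forall t, Pp t.+1 \in unitmx)
    (hJ : forall t, J t \in unitmx)
    (* fading-memory weights and learning rate *)
    (halpha : forall t, 0 <= alpha t) (heta0 : 0 < eta 0)
    (* the two recursions *)
    (hA : forall t, ekfA_step f Jf gr Fi alpha sA spA P Pp t)
    (hB : forall t, recB_step f Jf gr Fi eta gamma sB spB J t)
    (* hyperparameter coupling *)
    (hgam : forall t, gamma t.+1 = eta t.+1)
    (heta : forall t, (eta t.+1)^-1 = (1 + alpha t.+1)^-1 * (eta t)^-1 + 1)
    (* common initialization *)
    (hs0 : sA 0 = sB 0) (hP0 : P 0 = eta 0 *: invmx (J 0)) :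
  forall t, sA t = sB t /\ P t = eta t *: invmx (J t).
Proof.
suff H : forall t, [/\ 0 < eta t, sA t = sB t & P t = eta t *: invmx (J t)].
  by move=> t; case: (H t).
elim=> [|t [et0 hs hPt]]; first by [].
have [sp1 Pp1 iP1 s1] := hA t.
have [sp2 J1 s2] := hB t.
set F := Jf t.+1 (sB t) in J1 s2.
set a := alpha t.+1 in Pp1 heta.
have a1 : 0 < 1 + a by rewrite /a; have := halpha t.+1; lra.
have e1 : 0 < (eta t.+1)^-1.
  rewrite heta; apply: ltr_wpDl; last by [].
  by rewrite mulr_ge0 // ltW // invr_gt0.
have e'0 : 0 < eta t.+1 by rewrite -invr_gt0.
have e'n : eta t.+1 != 0 by rewrite gt_eqF.
have sp : spA t.+1 = spB t.+1 by rewrite sp1 sp2 hs.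
have iPp : invmx (Pp t.+1) =
    ((1 + a)^-1 * (eta t)^-1) *: ((invmx F)^T *m J t *m invmx F).
  have -> : Pp t.+1 = ((1 + a) * eta t) *: (F *m invmx (J t) *m F^T).
    by rewrite Pp1 hs hPt -/F -scalemxAr -scalemxAl scalerA.
  rewrite invmxZ; last by have := hPp t; rewrite Pp1 hs hPt -/F -scalemxAr -scalemxAl scalerA.
  by rewrite invmx_conj ?hJf ?unitmx_inv ?hJ // invmxK invfM mulrC.
have iP : invmx (P t.+1) = (eta t.+1)^-1 *: J t.+1.
  rewrite iP1 iPp J1 hgam sp scalerDr scalerA scalerA mulVf // scale1r.
  congr (_ + _); congr (_ *: _).
  by rewrite mulrBr mulr1 mulVf // heta; ring.
have hP1 : P t.+1 = eta t.+1 *: invmx (J t.+1).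
  rewrite -(invmxK (P t.+1)) iP invmxZ ?invrK //.
  by rewrite unitmxZ ?hJ // unitfE invr_eq0.
split => //.
by rewrite s1 s2 sp hP1 scalemxAl.
Qed.
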